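(* Let $\mathcal{H}=(V,E)$ be a hypergraph with connected components $\mathcal{H}_1=(V_1,E_1),\dots,\mathcal{H}_t=(V_t,E_t)$. Then $\kappa(\mathcal{H})=\sum_{i=1}^t\kappa(\mathcal{H}_i)$.
   Context: For $S\subseteq V$, $\mathcal{H}[S]$ is the hypergraph with vertex set $S$ and edge set $\{S\cap e : e\in E,\ S\cap e\neq\emptyset\}$. The reduced hypergraph $\mathsf{red}(\mathcal{H})$ has the same vertex set and is obtained by removing every edge $e$ for which there is another edge $e'\neq e$ with $e\subseteq e'$. $\tau^*(\mathcal{H})$ denotes the value of a maximum fractional edge packing of $\mathcal{H}$ (equivalently, of a minimum fractional vertex cover). The reduced quasi vertex-cover is $\kappa(\mathcal{H})=\max_{S\subseteq V}\tau^*(\mathsf{red}(\mathcal{H}[S]))$. *)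

(* Defs.v *)
From HB Require Import structures.
From mathcomp Require Import all_boot all_order all_algebra.
From mathcomp Require Import classical_sets reals.
Set Implicit Arguments. Unset Strict Implicit. Unset Printing Implicit Defensive.
Import Order.TTheory GRing.Theory Num.Theory.
Local Open Scope ring_scope.


(* A hypergraph on a finite ground type T is a pair (V, E) with
   V : {set T} and E : {set {set T}}; well-formedness (edges are nonempty
   subsets of V) is stated as a hypothesis. *)
Definition hypergraph_wf (T : finType) (V : {set T}) (E : {set {set T}}) : Prop :=
  forall e, e \in E -> (e \subset V) /\ e != finset.set0.

Definition induced_edges (T : finType) (E : {set {set T}}) (S : {set T})
  : {set {set T}} :=
  [set S :&: e | e in E & S :&: e != finset.set0].

Definition red_edges (T : finType) (E : {set {set T}}) : {set {set T}} :=
  [set e in E | ~~ [exists e' in E, (e' != e) && (e \subset e')]].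

Definition frac_edge_packing (R : realType) (T : finType) (V : {set T})
  (E : {set {set T}}) (y : {set T} -> R) : Prop :=
  (forall e, e \in E -> 0 <= y e) /\
  (forall v, v \in V -> \sum_(e in E | v \in e) y e <= 1).

Definition tau_star (R : realType) (T : finType) (V : {set T})
  (E : {set {set T}}) : R :=
  sup [set \sum_(e in E) y e | y in frac_edge_packing V E]%classic.

Definition kappa (R : realType) (T : finType) (V : {set T})
  (E : {set {set T}}) : R :=
  \big[Num.max/0]_(S : {set T} | S \subset V)
     tau_star R S (red_edges (induced_edges E S)).

Definition hadj (T : finType) (E : {set {set T}}) : rel T :=
  fun u v => [exists e in E, (u \in e) && (v \in e)].

Definition hcomp (T : finType) (V : {set T}) (E : {set {set T}}) (v : T)
  : {set T} :=
  [set u in V | connect (hadj E) v u].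

Definition hcomponents (T : finType) (V : {set T}) (E : {set {set T}})
  : {set {set T}} :=
  [set hcomp V E v | v in V].

Definition comp_edges (T : finType) (E : {set {set T}}) (C : {set T})
  : {set {set T}} :=
  [set e in E | e \subset C].

(* Main.v *)
Require Import Defs.
From HB Require Import structures.
From mathcomp Require Import all_boot all_order all_algebra.
From mathcomp Require Import classical_sets reals.
From mathcomp Require Import boolp.
Import Order.TTheory GRing.Theory Num.Theory.
Local Open Scope ring_scope.

Module Helpers.
Set Implicit Arguments. Unset Strict Implicit. Unset Printing Implicit Defensive.

Lemma sub_sum (R : realType) (T : finType) (P1 P2 : pred {set T}) (y : {set T} -> R) :
  (forall e, P1 e -> P2 e) -> (forall e, P2 e -> 0 <= y e) ->
  \sum_(e | P1 e) y e <= \sum_(e | P2 e) y e.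
Proof.
move=> h12 h0; rewrite [X in X <= _]big_mkcond [X in _ <= X]big_mkcond /=.
apply: ler_sum => e _.
case: (boolP (P1 e)) => p1; first by rewrite h12.
by case: (boolP (P2 e)) => p2 //; exact: h0.
Qed.

Definition okF (T : finType) (W : {set T}) (F : {set {set T}}) :=
  forall f, f \in F -> f != finset.set0 /\ f \subset W.

Lemma pack_le1 (R : realType) (T : finType) (W : {set T}) (F : {set {set T}}) (y : {set T} -> R) :
  okF W F -> frac_edge_packing W F y -> forall f, f \in F -> y f <= 1.
Proof.
move=> ok [h0 h1] f fF.
have [/set0Pn [v vf] fW] := ok f fF.
apply: (le_trans _ (h1 v (fintype.subsetP fW v vf))).
rewrite (bigD1 f) /=; last by rewrite fF vf.
rewrite lerDl; apply: sumr_ge0 => e /andP [/andP [eF _] _]; exact: h0.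
Qed.

Lemma tau_has_sup (R : realType) (T : finType) (W : {set T}) (F : {set {set T}}) :
  okF W F ->
  has_sup [set \sum_(e in F) y e | y in @frac_edge_packing R T W F]%classic.
Proof.
move=> ok; split.
  exists 0; exists (fun _ => 0); last by rewrite big1.
  by split => // v _; rewrite big1.
exists (#|F|%:R) => r [y yp <-].
rewrite -sumr_const; apply: ler_sum => e eF; exact: pack_le1 yp e eF.
Qed.

Lemma tau_ub (R : realType) (T : finType) (W : {set T}) (F : {set {set T}}) (y : {set T} -> R) :
  okF W F -> frac_edge_packing W F y -> \sum_(e in F) y e <= tau_star R W F.
Proof.
move=> ok yp; apply: (sup_upper_bound (tau_has_sup R ok)).
by exists y.
Qed.

Lemma tau_le (R : realType) (T : finType) (W : {set T}) (F : {set {set T}}) (x : R) :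
  (forall y, frac_edge_packing W F y -> \sum_(e in F) y e <= x) -> tau_star R W F <= x.
Proof.
move=> h; apply: ge_sup.
  exists 0; exists (fun _ => 0); last by rewrite big1.
  by split => // v _; rewrite big1.
by move=> r [y yp <-]; apply: h.
Qed.

Lemma tau_ge0 (R : realType) (T : finType) (W : {set T}) (F : {set {set T}}) :
  okF W F -> 0 <= tau_star R W F.
Proof.
move=> ok; have := @tau_ub R T W F (fun _ => 0) ok.
rewrite big1 //; apply; by split => // v _; rewrite big1.
Qed.

Definition piece (T : finType) (F : {set {set T}}) (C : {set T}) :=
  [set f in F | f \subset C].

Definition disjP (T : finType) (P : {set {set T}}) :=
  forall C C' x, C \in P -> C' \in P -> x \in C -> x \in C' -> C = C'.

Definition okFP (T : finType) (W : {set T}) (F : {set {set T}}) (P : {set {set T}}) :=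
  forall f, f \in F -> [/\ f != finset.set0, f \subset W & exists2 C, C \in P & f \subset C].

Lemma uniq_comp (T : finType) (W : {set T}) (F P : {set {set T}}) f C0 x :
  disjP P -> okFP W F P -> f \in F -> C0 \in P -> x \in f -> x \in C0 ->
  forall C, ((C \in P) && (f \subset C)) = (C == C0).
Proof.
move=> hP hF fF C0P xf xC0 C.
apply/idP/eqP.
  case/andP => CP fC; apply: (hP _ _ x CP C0P) => //; exact: (fintype.subsetP fC).
move=> ->; rewrite C0P /=.
have [_ _ [C1 C1P fC1]] := hF f fF.
by rewrite -(hP _ _ x C1P C0P) // (fintype.subsetP fC1).
Qed.

Lemma sum_split (R : realType) (T : finType) (W : {set T}) (F P : {set {set T}})
  (y : {set T} -> R) :
  disjP P -> okFP W F P ->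
  \sum_(f in F) y f = \sum_(C in P) \sum_(f in piece F C) y f.
Proof.
move=> hP hF.
have -> : \sum_(C in P) \sum_(f in piece F C) y f =
  \sum_(C in P) \sum_(f | (f \in F) && (f \subset C)) y f.
  by apply: eq_bigr => C _; apply: eq_bigl => f; rewrite inE.
rewrite (exchange_big_dep (fun f => f \in F)) /=; last by move=> C f _ /andP[].
apply: eq_bigr => f fF.
have [/set0Pn [x xf] _ [C0 C0P fC0]] := hF f fF.
rewrite (big_pred1 C0) // => C /=; rewrite fF /=.
apply: (uniq_comp hP hF fF C0P xf); exact: (fintype.subsetP fC0).
Qed.

Lemma restrict_pack (R : realType) (T : finType) (W : {set T}) (F : {set {set T}}) C
  (y : {set T} -> R) :
  frac_edge_packing W F y -> frac_edge_packing (W :&: C) (piece F C) y.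
Proof.
move=> [h0 h1]; split.
  by move=> e; rewrite inE => /andP [eF _]; exact: h0.
move=> v; rewrite inE => /andP [vW _].
apply: le_trans (h1 v vW).
apply: sub_sum; first by move=> e; rewrite inE => /andP [/andP [-> _] ->].
by move=> e /andP [eF _]; exact: h0.
Qed.

Lemma okF_piece (T : finType) (W : {set T}) (F P : {set {set T}}) C :
  okFP W F P -> okF (W :&: C) (piece F C).
Proof.
move=> hF f; rewrite inE => /andP [fF fC].
have [f0 fW _] := hF f fF; split => //; by rewrite finset.subsetI fW fC.
Qed.

Lemma okF_of (T : finType) (W : {set T}) (F P : {set {set T}}) :
  okFP W F P -> okF W F.
Proof. by move=> hF f fF; have [] := hF f fF. Qed.

Lemma tau_split (R : realType) (T : finType) (W : {set T}) (F P : {set {set T}}) :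
  disjP P -> okFP W F P -> (forall v, v \in W -> exists2 C, C \in P & v \in C) ->
  tau_star R W F = \sum_(C in P) tau_star R (W :&: C) (piece F C).
Proof.
move=> hP hF hW; apply/eqP; rewrite eq_le; apply/andP; split.
  apply: tau_le => y yp; rewrite (sum_split y hP hF).
  apply: ler_sum => C CP; apply: tau_ub; first exact: okF_piece hF.
  exact: restrict_pack.
apply/ler_addgt0Pr => ee e0.
pose n : R := #|P|%:R.
have n0 : 0 < n + 1 :> R by rewrite ltr_wpDl // ler0n.
pose eps : R := ee / (n + 1).
have eps0 : 0 < eps by rewrite divr_gt0.
have : forall C, exists Y : {set T} -> R, C \in P ->
    frac_edge_packing (W :&: C) (piece F C) Y /\
    tau_star R (W :&: C) (piece F C) - eps < \sum_(f in piece F C) Y f.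
  move=> C; case: (boolP (C \in P)) => CP; last by exists (fun _ => 0).
  have [r [Y Yp <-] lt] := sup_adherent eps0 (tau_has_sup R (okF_piece (C:=C) hF)).
  by exists Y.
case/choice => Y hY.
pose y (f : {set T}) : R := \sum_(C in P | f \subset C) Y C f.
have yp : frac_edge_packing W F y.
  split.
    move=> f fF; apply: sumr_ge0 => C /andP [CP fC].
    have [[h0 _] _] := hY C CP; apply: h0; by rewrite inE fF fC.
  move=> v vW; have [C0 C0P vC0] := hW v vW.
  have -> : \sum_(e in F | v \in e) y e = \sum_(e in piece F C0 | v \in e) Y C0 e.
    rewrite big_mkcond [RHS]big_mkcond; apply: eq_bigr => e _.
    case eF: (e \in F) => /=; last by rewrite inE eF.
    case ve: (v \in e) => /=; last by rewrite andbF.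
    have u := uniq_comp hP hF eF C0P ve vC0.
    have eC0 : e \subset C0 by have := u C0; rewrite eqxx C0P.
    rewrite inE eF eC0 /= /y (big_pred1 C0) //.
  have [[_ h1] _] := hY C0 C0P; apply: h1; by rewrite inE vW vC0.
have h1 : \sum_(C in P) (tau_star R (W :&: C) (piece F C) - eps) <= tau_star R W F.
  apply: le_trans (tau_ub (okF_of hF) yp).
  rewrite (sum_split y hP hF); apply: ler_sum => C CP.
  have -> : \sum_(f in piece F C) y f = \sum_(f in piece F C) Y C f.
    apply: eq_bigr => f; rewrite inE => /andP [fF fC].
    have [/set0Pn [x xf] _ _] := hF f fF.
    rewrite /y (big_pred1 C) //.
    exact: uniq_comp hP hF fF CP xf (fintype.subsetP fC x xf).
  exact: ltW (hY C CP).2.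
have h2 : eps *+ #|P| <= ee.
  rewrite -mulr_natr /eps -/n mulrAC ler_pdivrMr // ler_pM2l // lerDl //.
rewrite sumrB sumr_const in h1.
rewrite -(subrK (eps *+ #|P|) (\sum_(C in P) _)); exact: lerD h1 h2.
Qed.

Lemma hadj_sym (T : finType) (E : {set {set T}}) : symmetric (hadj E).
Proof.
move=> u v; rewrite /hadj; apply: eq_existsb => e.
by rewrite [(u \in e) && _]andbC.
Qed.

Lemma hcomp_eq (T : finType) (V : {set T}) (E : {set {set T}}) v x :
  connect (hadj E) v x -> hcomp V E v = hcomp V E x.
Proof.
move=> vx; apply/setP => w; rewrite !inE.
by rewrite (same_connect (sym_connect_sym (@hadj_sym T E)) vx w).
Qed.

Lemma compE (T : finType) (V : {set T}) (E : {set {set T}}) C x :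
  C \in hcomponents V E -> x \in C -> C = hcomp V E x.
Proof.
case/imsetP => v vV ->; rewrite inE => /andP [xV vx]; exact: hcomp_eq.
Qed.

Lemma comps_disj (T : finType) (V : {set T}) (E : {set {set T}}) :
  disjP (hcomponents V E).
Proof.
move=> C C' x CP C'P xC xC'; by rewrite (compE CP xC) (compE C'P xC').
Qed.

Lemma comp_subV (T : finType) (V : {set T}) (E : {set {set T}}) C :
  C \in hcomponents V E -> C \subset V.
Proof.
case/imsetP => v vV ->; apply/fintype.subsetP => u; rewrite inE => /andP [].
done.
Qed.

Lemma mem_hcomp (T : finType) (V : {set T}) (E : {set {set T}}) v :
  v \in V -> v \in hcomp V E v.
Proof. by move=> vV; rewrite inE vV connect0. Qed.

Lemma hcompP (T : finType) (V : {set T}) (E : {set {set T}}) v :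
  v \in V -> hcomp V E v \in hcomponents V E.
Proof. by move=> vV; apply: imset_f. Qed.

Lemma edge_sub (T : finType) (V : {set T}) (E : {set {set T}}) e x :
  hypergraph_wf V E -> e \in E -> x \in e -> e \subset hcomp V E x.
Proof.
move=> wf eE xe; apply/fintype.subsetP => u ue.
have [eV _] := wf e eE.
rewrite inE (fintype.subsetP eV u ue) /=; apply: connect1.
by apply/existsP; exists e; rewrite eE xe ue.
Qed.

Lemma edge_in_comp (T : finType) (V : {set T}) (E : {set {set T}}) e C x :
  hypergraph_wf V E -> e \in E -> C \in hcomponents V E -> x \in e -> x \in C ->
  e \subset C.
Proof. move=> wf eE CP xe xC; rewrite (compE CP xC); exact: edge_sub. Qed.

Lemma ind_ok (T : finType) (G : {set {set T}}) S f :
  f \in induced_edges G S -> f != finset.set0 /\ f \subset S.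
Proof.
case/imsetP => e; rewrite inE => /andP [_ ne] ->; split => //.
exact: finset.subsetIl.
Qed.

Lemma red_sub (T : finType) (G : {set {set T}}) f :
  f \in red_edges G -> f \in G.
Proof. by rewrite inE => /andP []. Qed.

Lemma okFP_red (T : finType) (V : {set T}) (E : {set {set T}}) (S : {set T}) :
  hypergraph_wf V E -> S \subset V ->
  okFP S (red_edges (induced_edges E S)) (hcomponents V E).
Proof.
move=> wf SV f /red_sub fI.
have [f0 fS] := ind_ok fI.
split => //.
case/imsetP: fI => e; rewrite inE => /andP [eE _] fe.
have /finset.set0Pn [x xf] := f0.
have xe : x \in e by move: xf; rewrite fe inE => /andP [].
have [eV _] := wf e eE.
exists (hcomp V E x); first exact: hcompP (fintype.subsetP eV x xe).
rewrite fe; exact: fintype.subset_trans (finset.subsetIr _ _) (edge_sub wf eE xe).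
Qed.

Lemma hW_S (T : finType) (V : {set T}) (E : {set {set T}}) (S : {set T}) :
  S \subset V -> forall v, v \in S -> exists2 C, C \in hcomponents V E & v \in C.
Proof.
move=> SV v vS; have vV := fintype.subsetP SV v vS.
by exists (hcomp V E v); [exact: hcompP | exact: mem_hcomp].
Qed.

Lemma ind_piece (T : finType) (V : {set T}) (E : {set {set T}}) (S C : {set T}) :
  hypergraph_wf V E -> C \in hcomponents V E ->
  induced_edges (comp_edges E C) (S :&: C) = piece (induced_edges E S) C.
Proof.
move=> wf CP; apply/setP => f; apply/imsetP/idP.
  case=> e; rewrite inE => /andP []; rewrite inE => /andP [eE eC] ne ->.
  have eq : S :&: C :&: e = S :&: e by rewrite -finset.setIA (finset.setIidPr eC).
  rewrite eq inE; apply/andP; split.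
    by apply/imsetP; exists e => //; rewrite inE eE -eq ne.
  apply: fintype.subset_trans eC; exact: finset.subsetIr.
rewrite inE => /andP [/imsetP [e]]; rewrite inE => /andP [eE ne] -> fC.
have /finset.set0Pn [x] := ne; rewrite inE => /andP [xS xe].
have xC : x \in C by apply: (fintype.subsetP fC); rewrite inE xS xe.
have eC := edge_in_comp wf eE CP xe xC.
have eq : S :&: C :&: e = S :&: e by rewrite -finset.setIA (finset.setIidPr eC).
by exists e; rewrite ?inE ?eE ?eC ?eq.
Qed.

Lemma red_piece (T : finType) (G : {set {set T}}) (C : {set T}) :
  (forall f, f \in G -> f != finset.set0) ->
  (forall f f', f \in G -> f' \in G -> f \subset C -> f != finset.set0 ->
      f \subset f' -> f' \subset C) ->
  red_edges (piece G C) = piece (red_edges G) C.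
Proof.
move=> hne h; apply/setP => f; rewrite !inE.
case fG: (f \in G); case fC: (f \subset C); rewrite //= ?andbF // ?andbT.
apply: f_equal; apply: eq_existsb => e'; rewrite inE.
case e'G: (e' \in G) => //=.
case: (boolP ((e' != f) && (f \subset e'))) => [/andP [_ ff'] | _]; rewrite ?andbF ?andbT //.
exact: h fG e'G fC (hne f fG) ff'.
Qed.

Lemma piece_eq (T : finType) (V : {set T}) (E : {set {set T}}) (S C : {set T}) :
  hypergraph_wf V E -> C \in hcomponents V E ->
  piece (red_edges (induced_edges E S)) C =
  red_edges (induced_edges (comp_edges E C) (S :&: C)).
Proof.
move=> wf CP; rewrite (ind_piece S wf CP) red_piece //.
  by move=> f /ind_ok [].
move=> f f' _ f'I fC /finset.set0Pn [x xf] ff'.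
case/imsetP: f'I => e'; rewrite inE => /andP [e'E _] fe'; subst f'.
have xC := fintype.subsetP fC x xf.
have := fintype.subsetP ff' x xf; rewrite inE => /andP [_ xe'].
apply: fintype.subset_trans (edge_in_comp wf e'E CP xe' xC); exact: finset.subsetIr.
Qed.

Lemma kappa_ge0 (R : realType) (T : finType) (W : {set T}) (G : {set {set T}}) :
  0 <= kappa R W G.
Proof. exact: bigmax_ge_id. Qed.

Lemma tau_ind_ge0 (R : realType) (T : finType) (G : {set {set T}}) (S : {set T}) :
  0 <= tau_star R S (red_edges (induced_edges G S)).
Proof. by apply: tau_ge0 => f /red_sub /ind_ok. Qed.

End Helpers.
Import Helpers.

Theorem lemma3p5 (R : realType) (T : finType) (V : {set T})
  (E : {set {set T}}) (wf : hypergraph_wf V E) :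
  kappa R V E =
  \sum_(C in hcomponents V E) kappa R C (comp_edges E C).
Proof.
have hP := @comps_disj T V E.
apply/eqP; rewrite eq_le; apply/andP; split.
  rewrite [X in X <= _]/kappa; apply: bigmax_le.
    by apply: sumr_ge0 => C _; exact: kappa_ge0.
  move=> S SV.
  rewrite (tau_split R hP (okFP_red wf SV) (hW_S E SV)).
  apply: ler_sum => C CP; rewrite (piece_eq S wf CP).
  apply: (le_bigmax_cond _ (j := S :&: C) (P := fun S' => S' \subset C)).
  exact: finset.subsetIr.
have : forall C : {set T}, exists S' : {set T}, C \in hcomponents V E -> S' \subset C /\
   kappa R C (comp_edges E C) =
   tau_star R S' (red_edges (induced_edges (comp_edges E C) S')).
  move=> C; case: (boolP (C \in hcomponents V E)) => CP; last by exists finset.set0.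
  have [S' S'C eq] := eq_bigmax finset.set0 (fun S' : {set T} => S' \subset C)
     (fun S' => tau_star R S' (red_edges (induced_edges (comp_edges E C) S')))
     (finset.sub0set C) (fun S' _ => tau_ind_ge0 R _ S').
  by exists S' => _; split.
case/choice => Sf hSf.
pose S := \bigcup_(C in hcomponents V E) Sf C.
have SV : S \subset V.
  apply/finset.bigcupsP => C CP; have [SC _] := hSf C CP.
  exact: fintype.subset_trans SC (comp_subV CP).
have SI : forall C, C \in hcomponents V E -> S :&: C = Sf C.
  move=> C CP; have [SC _] := hSf C CP; apply/setP => x; rewrite inE.
  apply/andP/idP.
    case=> /finset.bigcupP [C' C'P xC'] xC.
    have [SC' _] := hSf C' C'P.
    by rewrite (hP _ _ x CP C'P xC (fintype.subsetP SC' x xC')).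
  move=> xS; split; last exact: (fintype.subsetP SC).
  by apply/finset.bigcupP; exists C.
have -> : \sum_(C in hcomponents V E) kappa R C (comp_edges E C) =
          tau_star R S (red_edges (induced_edges E S)).
  rewrite (tau_split R hP (okFP_red wf SV) (hW_S E SV)).
  apply: eq_bigr => C CP; rewrite (piece_eq S wf CP) SI //.
  by have [_ ->] := hSf C CP.
rewrite /kappa; apply: (le_bigmax_cond _ (j := S) (P := fun S' => S' \subset V)).
exact: SV.
Qed.
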